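(* Let $W$ be $\{0,1\}$-valued, $x\in\mathbb X$, $\preceq$ a total order on $\{X\Subset\mathbb X\mid x\in X\}$, and for each $e\in\mathfrak h(x)$ a total order (also $\preceq$) on $e'=e\setminus\{x\}$. Let $e\in\mathfrak h(x)$, $x'\in e'$, and $y\in\mathbb X$ such that $\{y\}\notin\mathfrak h_e/e'_{\prec x'}$. Then \[ \deg_{\mathfrak h_e/e'_{\prec x'}}(y)\le\deg_{\mathfrak h}(y), \] and if additionally $x\neq y$ or $\{x\}\notin\mathfrak h$, then also $\{y\}\notin\mathfrak h$.
   Context: $\mathbb X$ is a finite or countably infinite set; $e\Subset\mathbb X$ means finite subset. $W:\{X\Subset\mathbb X\}\to\{0,1\}$ and $\mathfrak h=\{e\Subset\mathbb X\mid W(e)=0\}$. For a set $\mathfrak g$ of finite subsets of $\mathbb X$ and $y\in\mathbb X$, $\mathfrak g(y)=\{e\in\mathfrak g\mid y\in e\}$ and $\deg_{\mathfrak g}(y)=|\mathfrak g(y)|\in\{0,1,\dots\}\cup\{\infty\}$. For a set $\mathfrak g$ of finite subsets and $B\Subset\mathbb X$, define $\mathfrak g/B=\{e\setminus B\mid e\in\mathfrak g\}\cup\{\{y\}\mid y\in B\}$ (this is the set of $e$ with $W_{\mathfrak g}(e\mid B)=0$ for the hard-core interaction $W_{\mathfrak g}=\mathbf 1_{\{\cdot\notin\mathfrak g\}}$ and the conditional interaction $W(X\mid B)=\prod_{C\subset B}W(X\cup C)$ if $X\cap B=\varnothing$, $0$ if $X=\{y\}$ with $y\in B$, $1$ otherwise).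 For $e\in\mathfrak h(x)$ let \[ \mathfrak h_e=\{b\setminus\{x\}\mid b\in\mathfrak h(x),\ b\prec e\}\cup\big(\mathfrak h\setminus(\mathfrak h(x)\setminus\{e\})\big), \] where $\prec$ is the strict part of $\preceq$; and for $x'\in e'$, $e'_{\prec x'}=\{x''\in e'\mid x''\prec x'\}$. *)

(* Defs.v *)
From mathcomp Require Import all_boot finmap.
From mathcomp Require Import boolp classical_sets cardinality.
Set Implicit Arguments. Unset Strict Implicit. Unset Printing Implicit Defensive.
Local Open Scope classical_set_scope.
Local Open Scope fset_scope.

(* The ground set X is a countType T (finite or countably infinite);
   finite subsets of X are elements of {fset T};
   sets of finite subsets are elements of set {fset T}. *)

Definition hset (T : countType) (W : {fset T} -> nat) : set {fset T} :=
  [set e | W e = 0%N].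

Definition gat (T : countType) (g : set {fset T}) (y : T) : set {fset T} :=
  [set e | g e /\ y \in e].

(* extended naturals N ∪ {∞}: None = ∞ *)
Definition extnat := option nat.
Definition extnat_le (a b : extnat) : Prop :=
  match a, b with
  | _, None => True
  | None, Some _ => False
  | Some m, Some n => (m <= n)%N
  end.

Definition deg (T : countType) (g : set {fset T}) (y : T) : extnat :=
  if pselect (finite_set (gat g y)) then Some #|` fset_set (gat g y)| else None.

Definition quot (T : countType) (g : set {fset T}) (B : {fset T}) : set {fset T} :=
  [set c | (exists2 e, g e & c = e `\` B) \/ (exists2 y, y \in B & c = [fset y])].

Definition total_order_on (A : Type) (D : set A) (R : A -> A -> Prop) : Prop :=
  [/\ (forall a, D a -> R a a),
      (forall a b, D a -> D b -> R a b -> R b a -> a = b),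
      (forall a b c, D a -> D b -> D c -> R a b -> R b c -> R a c) &
      (forall a b, D a -> D b -> R a b \/ R b a)].

Definition strict (A : Type) (R : A -> A -> Prop) (a b : A) : Prop := R a b /\ a <> b.

Definition h_e (T : countType) (h : set {fset T}) (x : T)
    (le : {fset T} -> {fset T} -> Prop) (e : {fset T}) : set {fset T} :=
  [set c | exists2 b, gat h x b /\ strict le b e & c = b `\ x]
  `|` (h `\` (gat h x `\` [set e])).

Definition below (T : countType) (e' : {fset T}) (R : T -> T -> Prop) (x' : T)
  : {fset T} :=
  [fset x'' in e' | `[< strict R x'' x' >]].

(* Main.v *)
Require Import Defs.
From mathcomp Require Import all_boot finmap.
From mathcomp Require Import boolp classical_sets cardinality.
Local Open Scope classical_set_scope.
Local Open Scope fset_scope.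

Lemma deg_le (T : countType) (g1 g2 : set {fset T}) (y : T)
  (f : {fset T} -> {fset T}) :
  (gat g1 y `<=` f @` gat g2 y)%classic -> extnat_le (deg g1 y) (deg g2 y).
Proof.
move=> sub; rewrite /deg.
case: (pselect (finite_set (gat g2 y))) => f2; last first.
  by case: pselect.
have f1 : finite_set (gat g1 y) by apply: sub_finite_set sub (finite_image _ f2).
case: pselect => // _ /=.
have fi := finite_image f f2.
move: sub; rewrite (fset_set_sub f1 fi) (fset_set_image _ f2) => /fsubset_leq_card.
move=> h; apply: (leq_trans h); exact: leq_imfset_card.
Qed.

Theorem corollary5p4 (T : countType) (W : {fset T} -> nat) (x : T)
    (le : {fset T} -> {fset T} -> Prop) (ord : {fset T} -> T -> T -> Prop)
    (e : {fset T}) (x' y : T) :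
  (forall X, W X = 0%N \/ W X = 1%N) ->
  total_order_on [set X : {fset T} | x \in X] le ->
  (forall f, gat (hset W) x f -> total_order_on [set z | z \in f `\ x] (ord f)) ->
  gat (hset W) x e ->
  x' \in e `\ x ->
  ~ quot (h_e (hset W) x le e) (below (e `\ x) (ord e) x') [fset y] ->
  extnat_le (deg (quot (h_e (hset W) x le e) (below (e `\ x) (ord e) x')) y)
            (deg (hset W) y)
  /\ ((x <> y \/ ~ hset W [fset x]) -> ~ hset W [fset y]).
Proof.
move=> _ _ _ _ _ nQ.
set B := below (e `\ x) (ord e) x'.
split.
  apply: (@deg_le _ _ _ _ (fun h => if (x \in h) && (h != e) then (h `\ x) `\` B else h `\` B)).
  move=> c [[[g Gg ->]|[z zB cz]] yc]; last first.
    by exfalso; apply: nQ; right; exists z => //; move: yc; rewrite cz inE => /eqP <-.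
  case: Gg => [[b [[Hb xb] [lbe nbe]] gb]|[Hg ngx]].
    exists b.
      split => //; move: yc; rewrite gb !inE; by case/and3P.
    by rewrite /= xb; move/eqP: nbe => ->; rewrite gb.
  exists g.
    split => //; move: yc; rewrite !inE; by case/andP.
  case: ifP => //= /andP [xg /eqP ge]; exfalso; apply: ngx; split => //.
move=> hyp Hy; apply: nQ.
case yB: (y \in B).
  by right; exists y.
left; exists [fset y].
  right; split => //; case=> [[_ xy] ne]; rewrite inE in xy; move/eqP: xy => xy; subst y.
  by case: hyp.
apply/fsetP => z; rewrite in_fsetD in_fset1; case: eqP => [->|_]; by rewrite ?yB ?andbF ?andbT.
Qed.
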